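(* Let $n>k\ge1$ be coprime integers, $\eta$ in the upper half-plane, $\Lambda=\mathbb{Z}+\mathbb{Z}\eta$. For all $\tau\in\mathbb{C}\setminus\frac1n\Lambda$ and $z\in\mathbb{C}$, $$R_{n,k,\tau}(z)^{\bullet}=e(-n^2z)\,R_{n,n-k,-\tau}(-z),$$ where for $A\in\mathrm{End}(V\otimes V)$, $A^\bullet$ is the adjoint of $A$ with respect to the symmetric bilinear form on $V\otimes V$ with $\langle x_i\otimes x_k,x_j\otimes x_\ell\rangle=\delta_{ij}\delta_{k\ell}$, i.e. $\langle A^\bullet x,y\rangle=\langle x,Ay\rangle$ for all $x,y$.
   Context: Write $e(z)=e^{2\pi i z}$ and $\theta(z)=\sum_{m\in\mathbb{Z}}(-1)^m e\big(mz+\tfrac12 m(m-1)\eta\big)$. For $\alpha\in\mathbb{Z}$ put $\theta_\alpha(z)=e\big(\alpha z+\tfrac{\alpha}{2n}+\tfrac{\alpha(\alpha-n)}{2n}\eta\big)\prod_{m=0}^{n-1}\theta\big(z+\tfrac mn+\tfrac{\alpha}{n}\eta\big)$, regarded as indexed by $\alpha\in\mathbb{Z}_n$. Let $V$ be an $n$-dimensional complex vector space with basis $x_i$, $i\in\mathbb{Z}_n$. For an integer $1\le k'<n$ coprime to $n$, $\tau\in\mathbb{C}\setminus\frac1n\Lambda$ and $z\in\mathbb{C}$, define $R_{n,k',\tau}(z)\in\mathrm{End}(V\otimes V)$ by $$R_{n,k',\tau}(z)(x_i\otimes x_j)=\frac{\theta_0(-z)\cdots\theta_{n-1}(-z)}{\theta_1(0)\cdots\theta_{n-1}(0)}\sum_{r\in\mathbb{Z}_n}\frac{\theta_{j-i+r(k'-1)}(-z+\tau)}{\theta_{j-i-r}(-z)\,\theta_{k'r}(\tau)}\,x_{j-r}\otimes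 x_{i+r}.$$ *)

(* Defs.v *)
From Stdlib Require Import Reals ZArith List.
From Coquelicot Require Import Coquelicot.
Open Scope R_scope.

(* e(w) = exp(2 pi i w), written out with real exp/cos/sin. *)
Definition ee (w : C) : C :=
  (exp (-(2*PI*Im w)) * cos (2*PI*Re w), exp (-(2*PI*Im w)) * sin (2*PI*Re w)).

Definition sgnZ (m : Z) : R := if Z.even m then 1 else -1.

Definition theta_term (eta z : C) (m : Z) : C :=
  Cmult (RtoC (sgnZ m))
    (ee (Cplus (Cmult (RtoC (IZR m)) z)
               (Cmult (RtoC (IZR (m*(m-1)) / 2)) eta))).

(* theta(z) = sum over m in Z, split as m >= 0 and m <= -1, real and
   imaginary parts summed separately (the series converges absolutely
   when Im eta > 0). *)
Definition theta (eta z : C) : C :=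
  (Series (fun k => Re (theta_term eta z (Z.of_nat k)))
     + Series (fun k => Re (theta_term eta z (- Z.of_nat k - 1)%Z)),
   Series (fun k => Im (theta_term eta z (Z.of_nat k)))
     + Series (fun k => Im (theta_term eta z (- Z.of_nat k - 1)%Z))).

Definition idx (n : nat) : list Z := map Z.of_nat (seq 0 n).
Definition csum (l : list Z) (f : Z -> C) : C := fold_right Cplus (RtoC 0) (map f l).
Definition cprod (l : list Z) (f : Z -> C) : C := fold_right Cmult (RtoC 1) (map f l).

(* theta_alpha, alpha regarded in Z_n via its representative in [0,n). *)
Definition theta_alpha (n : nat) (eta : C) (alpha : Z) (z : C) : C :=
  let a := Z.modulo alpha (Z.of_nat n) in
  let nR := INR n in
  Cmult
    (ee (Cplus (Cplus (Cmult (RtoC (IZR a)) z) (RtoC (IZR a / (2 * nR))))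
               (Cmult (RtoC (IZR (a * (a - Z.of_nat n)) / (2 * nR))) eta)))
    (cprod (idx n) (fun m =>
       theta eta (Cplus (Cplus z (RtoC (IZR m / nR))) (Cmult (RtoC (IZR a / nR)) eta)))).

(* Coefficient of the r-th summand of R_{n,k',tau}(z)(x_i (x) x_j).
   The quotient theta_0(-z)...theta_{n-1}(-z) / theta_{j-i-r}(-z) is taken
   as the (entire) product over beta in Z_n with beta <> j-i-r. *)
Definition Rcoef (n k' : nat) (eta tau z : C) (i j r : Z) : C :=
  let nZ := Z.of_nat n in
  Cmult
    (Cdiv (cprod (filter (fun b => negb (Z.eqb b (Z.modulo (j - i - r) nZ))) (idx n))
                 (fun b => theta_alpha n eta b (Copp z)))
          (cprod (map Z.of_nat (seq 1 (n - 1))) (fun b => theta_alpha n eta b (RtoC 0))))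
    (Cdiv (theta_alpha n eta (j - i + r * (Z.of_nat k' - 1)) (Cplus (Copp z) tau))
          (theta_alpha n eta (Z.of_nat k' * r) tau)).

(* Vectors of V (x) V in coordinates: v a b = coefficient of x_a (x) x_b,
   a, b in {0,..,n-1}. *)
Definition Rop (n k' : nat) (eta tau z : C) (v : Z -> Z -> C) : Z -> Z -> C :=
  fun a b =>
    csum (idx n) (fun i => csum (idx n) (fun j => csum (idx n) (fun r =>
      if andb (Z.eqb a (Z.modulo (j - r) (Z.of_nat n))) (Z.eqb b (Z.modulo (i + r) (Z.of_nat n)))
      then Cmult (Rcoef n k' eta tau z i j r) (v i j)
      else RtoC 0))).

Definition bform (n : nat) (u v : Z -> Z -> C) : C :=
  csum (idx n) (fun a => csum (idx n) (fun b => Cmult (u a b) (v a b))).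

(* Main.v *)
Require Import Defs.
From Stdlib Require Import Reals ZArith List.
From Coquelicot Require Import Coquelicot.
Open Scope R_scope.
From Stdlib Require Import Lia Lra Permutation.


Ltac Ceq := apply injective_projections; unfold Cmult, Cplus, Copp, Cminus, RtoC, Re, Im; simpl.

Lemma ee_add (a b : C) : ee (Cplus a b) = Cmult (ee a) (ee b).
Proof.
  destruct a as [a1 a2], b as [b1 b2]. unfold ee, Cmult, Cplus, Re, Im; simpl.
  replace (2*PI*(a1+b1)) with (2*PI*a1 + 2*PI*b1) by ring.
  replace (-(2*PI*(a2+b2))) with (-(2*PI*a2) + -(2*PI*b2)) by ring.
  rewrite exp_plus, cos_plus, sin_plus. f_equal; ring.
Qed.

Lemma cos_2PI_Z (t : Z) : cos (2*PI*IZR t) = 1.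
Proof.
  destruct (Z_le_gt_dec 0 t) as [H|H].
  - rewrite <- (Z2Nat.id t H), <- INR_IZR_INZ.
    replace (2*PI*INR (Z.to_nat t)) with (0 + 2 * INR (Z.to_nat t) * PI) by ring.
    rewrite cos_period. apply cos_0.
  - replace t with (- Z.of_nat (Z.to_nat (-t)))%Z by lia.
    rewrite opp_IZR, <- INR_IZR_INZ.
    replace (2*PI*-INR (Z.to_nat (-t))) with (-(0 + 2 * INR (Z.to_nat (-t)) * PI)) by ring.
    rewrite cos_neg, cos_period. apply cos_0.
Qed.

Lemma sin_2PI_Z (t : Z) : sin (2*PI*IZR t) = 0.
Proof.
  apply sin_eq_0_1. exists (2*t)%Z. rewrite mult_IZR. simpl. ring.
Qed.

Lemma ee_int (t : Z) : ee (RtoC (IZR t)) = RtoC 1.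
Proof.
  unfold ee, RtoC, Re, Im; simpl. rewrite cos_2PI_Z, sin_2PI_Z.
  replace (-(2*PI*0)) with 0 by ring. rewrite exp_0. f_equal; ring.
Qed.

Lemma ee_0 : ee (RtoC 0) = RtoC 1.
Proof. exact (ee_int 0). Qed.

Lemma ee_half : ee (RtoC (1/2)) = Copp (RtoC 1).
Proof.
  unfold ee, RtoC, Copp, Re, Im; simpl.
  replace (2*PI*(1/2)) with PI by field. rewrite cos_PI, sin_PI.
  replace (-(2*PI*0)) with 0 by ring. rewrite exp_0. f_equal; ring.
Qed.

Lemma ee_per (w : C) (t : Z) : ee (Cplus w (RtoC (IZR t))) = ee w.
Proof. rewrite ee_add, ee_int. Ceq; ring. Qed.

Lemma ee_opp (w : C) : Cmult (ee w) (ee (Copp w)) = RtoC 1.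
Proof.
  rewrite <- ee_add. replace (Cplus w (Copp w)) with (RtoC 0) by (Ceq; ring). apply ee_0.
Qed.

Lemma ee_ext (a b : C) : a = b -> ee a = ee b.
Proof. intros ->; reflexivity. Qed.

Lemma Cmod_ee (w : C) : Cmod (ee w) = exp (-(2*PI*Im w)).
Proof.
  unfold Cmod, ee. cbv beta iota delta [fst snd].
  replace ((exp (- (2 * PI * Im w)) * cos (2 * PI * Re w)) ^ 2 +
    (exp (- (2 * PI * Im w)) * sin (2 * PI * Re w)) ^ 2) with
    (exp (- (2 * PI * Im w)) ^2 * (sin (2 * PI * Re w) ^2 + cos (2 * PI * Re w) ^2)) by ring.
  rewrite <- (Rsqr_pow2 (sin _)), <- (Rsqr_pow2 (cos _)), sin2_cos2, Rmult_1_r.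
  rewrite <- Rsqr_pow2. apply sqrt_Rsqr. apply Rlt_le, exp_pos.
Qed.
Lemma csum_app l1 l2 f : csum (l1 ++ l2) f = Cplus (csum l1 f) (csum l2 f).
Proof. unfold csum. induction l1; simpl. Ceq; ring. rewrite IHl1. Ceq; ring. Qed.
Lemma cprod_app l1 l2 f : cprod (l1 ++ l2) f = Cmult (cprod l1 f) (cprod l2 f).
Proof. unfold cprod. induction l1; simpl. Ceq; ring. rewrite IHl1. Ceq; ring. Qed.

Lemma csum_perm l l' f : Permutation l l' -> csum l f = csum l' f.
Proof. unfold csum. induction 1; simpl; auto.
  - rewrite IHPermutation; auto.
  - Ceq; ring.
  - congruence. Qed.
Lemma cprod_perm l l' f : Permutation l l' -> cprod l f = cprod l' f.
Proof. unfold cprod. induction 1; simpl; auto.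
  - rewrite IHPermutation; auto.
  - Ceq; ring.
  - congruence. Qed.

Lemma csum_ext_in l f g : (forall x, In x l -> f x = g x) -> csum l f = csum l g.
Proof. unfold csum. induction l; simpl; intros H; auto. rewrite H, IHl; auto. Qed.
Lemma cprod_ext_in l f g : (forall x, In x l -> f x = g x) -> cprod l f = cprod l g.
Proof. unfold cprod. induction l; simpl; intros H; auto. rewrite H, IHl; auto. Qed.

Lemma csum_plus l f g : csum l (fun x => Cplus (f x) (g x)) = Cplus (csum l f) (csum l g).
Proof. unfold csum. induction l; simpl. Ceq; ring. rewrite IHl. Ceq; ring. Qed.
Lemma csum_scal l c f : csum l (fun x => Cmult c (f x)) = Cmult c (csum l f).
Proof. unfold csum. induction l; simpl. Ceq; ring. rewrite IHl. Ceq; ring. Qed.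
Lemma cprod_mult l f g : cprod l (fun x => Cmult (f x) (g x)) = Cmult (cprod l f) (cprod l g).
Proof. unfold cprod. induction l; simpl. Ceq; ring. rewrite IHl. Ceq; ring. Qed.

Lemma csum_zero l : csum l (fun _ => RtoC 0) = RtoC 0.
Proof. unfold csum. induction l; simpl; auto. rewrite IHl. Ceq; ring. Qed.

Lemma csum_swap l1 l2 f :
  csum l1 (fun x => csum l2 (fun y => f x y)) = csum l2 (fun y => csum l1 (fun x => f x y)).
Proof.
  induction l1; simpl.
  - symmetry. apply csum_zero.
  - change (Cplus (csum l2 (fun y => f a y)) (csum l1 (fun x => csum l2 (fun y => f x y)))
      = csum l2 (fun y => Cplus (f a y) (csum l1 (fun x => f x y)))).
    rewrite csum_plus, IHl1. reflexivity.
Qed.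

Lemma csum_map l s f : csum (map s l) f = csum l (fun x => f (s x)).
Proof. unfold csum. rewrite map_map. reflexivity. Qed.
Lemma cprod_map l s f : cprod (map s l) f = cprod l (fun x => f (s x)).
Proof. unfold cprod. rewrite map_map. reflexivity. Qed.

Lemma in_idx n x : In x (idx n) <-> (0 <= x < Z.of_nat n)%Z.
Proof.
  unfold idx. rewrite in_map_iff. split.
  - intros [m [<- Hm]]. apply in_seq in Hm. lia.
  - intros H. exists (Z.to_nat x). split. lia. apply in_seq. lia.
Qed.

Lemma NoDup_idx n : NoDup (idx n).
Proof.
  unfold idx. apply FinFun.Injective_map_NoDup. intros a b; lia. apply seq_NoDup.
Qed.

Lemma length_idx n : length (idx n) = n.
Proof. unfold idx. rewrite length_map, length_seq. reflexivity. Qed.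

Lemma perm_idx n (s : Z -> Z) :
  (forall y, (0 <= y < Z.of_nat n)%Z -> exists x, (0 <= x < Z.of_nat n)%Z /\ s x = y) ->
  Permutation (idx n) (map s (idx n)).
Proof.
  intros Hs. apply NoDup_Permutation_bis. apply NoDup_idx.
  rewrite length_map; lia.
  intros y Hy. apply in_idx in Hy. destruct (Hs y Hy) as [x [Hx <-]].
  apply in_map. apply in_idx; auto.
Qed.

Lemma csum_reidx n s f :
  (forall y, (0 <= y < Z.of_nat n)%Z -> exists x, (0 <= x < Z.of_nat n)%Z /\ s x = y) ->
  csum (idx n) (fun x => f (s x)) = csum (idx n) f.
Proof. intros H. rewrite <- csum_map. symmetry. apply csum_perm, perm_idx, H. Qed.
Lemma cprod_reidx n s f :
  (forall y, (0 <= y < Z.of_nat n)%Z -> exists x, (0 <= x < Z.of_nat n)%Z /\ s x = y) ->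
  cprod (idx n) (fun x => f (s x)) = cprod (idx n) f.
Proof. intros H. rewrite <- cprod_map. symmetry. apply cprod_perm, perm_idx, H. Qed.

Lemma csum_delta l (p : Z -> bool) g x0 :
  NoDup l -> In x0 l -> (forall x, In x l -> (p x = true <-> x = x0)) ->
  csum l (fun x => if p x then g x else RtoC 0) = g x0.
Proof.
  induction l as [|a l IH]; simpl; intros Hnd Hin Hp. contradiction.
  inversion Hnd; subst. destruct Hin as [Ha|Hin].
  - subst x0. assert (p a = true) as Epa by (apply Hp; auto).
    assert (csum l (fun x => if p x then g x else RtoC 0) = csum l (fun _ => RtoC 0)) as E0.
    { apply csum_ext_in. intros x Hx.
      destruct (p x) eqn:E; auto. apply Hp in E; [subst; contradiction | right; auto]. }
    rewrite csum_zero in E0. unfold csum in *. simpl. rewrite E0, Epa. Ceq; ring.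
  - assert (p a = false) as Epa.
    { destruct (p a) eqn:E; auto. apply Hp in E; [subst; contradiction | left; auto]. }
    unfold csum in *. simpl. rewrite Epa, IH; auto. Ceq; ring.
Qed.

Lemma cprod_filter l (p : Z -> bool) f :
  cprod l f = Cmult (cprod (filter p l) f) (cprod (filter (fun x => negb (p x)) l) f).
Proof.
  unfold cprod. induction l as [|a l IH]; simpl. Ceq; ring.
  destruct (p a); simpl; rewrite IH; Ceq; ring.
Qed.
Definition RZsum (g : Z -> R) : R :=
  Series (fun k => g (Z.of_nat k)) + Series (fun k => g (- Z.of_nat k - 1)%Z).
Definition RZok (g : Z -> R) : Prop :=
  ex_series (fun k => g (Z.of_nat k)) /\ ex_series (fun k => g (- Z.of_nat k - 1)%Z).
Definition Zsum (f : Z -> C) : C := (RZsum (fun m => Re (f m)), RZsum (fun m => Im (f m))).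
Definition Zok (f : Z -> C) : Prop := RZok (fun m => Cmod (f m)).

Lemma theta_Zsum eta z : theta eta z = Zsum (theta_term eta z).
Proof. reflexivity. Qed.

Lemma RZsum_ext g h : (forall m, g m = h m) -> RZsum g = RZsum h.
Proof. intros H. unfold RZsum. f_equal; apply Series_ext; auto. Qed.
Lemma RZok_ext g h : (forall m, g m = h m) -> RZok g -> RZok h.
Proof. intros H [H1 H2]. split.
  eapply ex_series_ext; [|exact H1]. intros; simpl; auto.
  eapply ex_series_ext; [|exact H2]. intros; simpl; auto. Qed.
Lemma Zsum_ext f g : (forall m, f m = g m) -> Zsum f = Zsum g.
Proof. intros H. unfold Zsum. f_equal; apply RZsum_ext; intros; rewrite H; auto. Qed.
Lemma Zok_ext f g : (forall m, f m = g m) -> Zok f -> Zok g.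
Proof. intros H. apply RZok_ext. intros; rewrite H; auto. Qed.

Lemma exs_le (a : nat -> R) (b : nat -> R) : (forall k, Rabs (a k) <= b k) -> ex_series b -> ex_series a.
Proof. intros H Hb. apply (ex_series_le a b); auto. Qed.

Lemma im_le_Cmod c : Rabs (Im c) <= Cmod c.
Proof.
  unfold Cmod. rewrite <- sqrt_Rsqr_abs. apply sqrt_le_1_alt.
  unfold Rsqr. destruct c; simpl. nra.
Qed.

Lemma Zok_Re f : Zok f -> RZok (fun m => Re (f m)).
Proof. intros [H1 H2]; split; [eapply exs_le; [|exact H1]|eapply exs_le; [|exact H2]]; intros; apply re_le_Cmod. Qed.
Lemma Zok_Im f : Zok f -> RZok (fun m => Im (f m)).
Proof. intros [H1 H2]; split; [eapply exs_le; [|exact H1]|eapply exs_le; [|exact H2]]; intros; apply im_le_Cmod. Qed.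

Lemma RZok_shift g : RZok g -> RZok (fun m => g (m+1)%Z).
Proof.
  intros [H1 H2]; split.
  - apply ex_series_incr_1 in H1. eapply ex_series_ext; [|exact H1]. intros k; cbv beta.
    f_equal. lia.
  - apply ex_series_incr_1. eapply ex_series_ext; [|exact H2]. intros k; cbv beta.
    f_equal. lia.
Qed.
Lemma RZok_neg g : RZok g -> RZok (fun m => g (-m)%Z).
Proof.
  intros [H1 H2]; split.
  - apply ex_series_incr_1. eapply ex_series_ext; [|exact H2]. intros k; cbv beta.
    f_equal. lia.
  - apply ex_series_incr_1 in H1. eapply ex_series_ext; [|exact H1]. intros k; cbv beta.
    f_equal. lia.
Qed.

Lemma RZsum_shift g : RZok g -> RZsum (fun m => g (m+1)%Z) = RZsum g.
Proof.
  intros [H1 H2]. unfold RZsum.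
  rewrite (Series_incr_1 (fun k => g (Z.of_nat k))) by auto.
  assert (H3 : ex_series (fun k => g (- Z.of_nat k - 1 + 1)%Z)).
  { apply ex_series_incr_1. eapply ex_series_ext; [|exact H2]. intros k; cbv beta. f_equal. lia. }
  rewrite (Series_incr_1 _ H3).
  rewrite (Series_ext (fun k => g (Z.of_nat k + 1)%Z) (fun k => g (Z.of_nat (S k)))) by (intros; f_equal; lia).
  rewrite (Series_ext (fun k => g (- Z.of_nat (S k) - 1 + 1)%Z) (fun k => g (- Z.of_nat k - 1)%Z)) by (intros; f_equal; lia).
  simpl. replace (- 0 - 1 + 1)%Z with 0%Z by lia. ring.
Qed.

Lemma RZsum_neg g : RZok g -> RZsum (fun m => g (-m)%Z) = RZsum g.
Proof.
  intros [H1 H2]. unfold RZsum.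
  rewrite (Series_incr_1 (fun k => g (Z.of_nat k))) by auto.
  assert (H3 : ex_series (fun k => g (- Z.of_nat k)%Z)).
  { apply ex_series_incr_1. eapply ex_series_ext; [|exact H2]. intros k; cbv beta. f_equal. lia. }
  rewrite (Series_incr_1 _ H3).
  rewrite (Series_ext (fun k => g (- Z.of_nat (S k))%Z) (fun k => g (- Z.of_nat k - 1)%Z)) by (intros; f_equal; lia).
  rewrite (Series_ext (fun k => g (- (- Z.of_nat k - 1))%Z) (fun k => g (Z.of_nat (S k)))) by (intros; f_equal; lia).
  simpl. ring.
Qed.

Lemma Zok_shift f : Zok f -> Zok (fun m => f (m+1)%Z).
Proof. apply RZok_shift. Qed.
Lemma Zok_neg f : Zok f -> Zok (fun m => f (-m)%Z).
Proof. apply RZok_neg. Qed.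

Lemma Zsum_shift f : Zok f -> Zsum (fun m => f (m+1)%Z) = Zsum f.
Proof.
  intros H. unfold Zsum. f_equal.
  apply (RZsum_shift (fun m => Re (f m))), Zok_Re, H.
  apply (RZsum_shift (fun m => Im (f m))), Zok_Im, H.
Qed.
Lemma Zsum_neg f : Zok f -> Zsum (fun m => f (-m)%Z) = Zsum f.
Proof.
  intros H. unfold Zsum. f_equal.
  apply (RZsum_neg (fun m => Re (f m))), Zok_Re, H.
  apply (RZsum_neg (fun m => Im (f m))), Zok_Im, H.
Qed.

Lemma RZsum_lin a b g h : RZok g -> RZok h ->
  RZsum (fun m => a * g m - b * h m) = a * RZsum g - b * RZsum h.
Proof.
  intros [G1 G2] [H1 H2]. unfold RZsum.
  assert (L : forall u v : nat -> R, ex_series u -> ex_series v ->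
    Series (fun k => a * u k - b * v k) = a * Series u - b * Series v).
  { intros u v Hu Hv. rewrite Series_minus.
    rewrite !Series_scal_l. reflexivity.
    apply (ex_series_scal_l a u Hu). apply (ex_series_scal_l b v Hv). }
  rewrite (L (fun k => g (Z.of_nat k)) (fun k => h (Z.of_nat k))) by auto.
  rewrite (L (fun k => g (- Z.of_nat k - 1)%Z) (fun k => h (- Z.of_nat k - 1)%Z)) by auto.
  ring.
Qed.

Lemma Zsum_scal c f : Zok f -> Zsum (fun m => Cmult c (f m)) = Cmult c (Zsum f).
Proof.
  intros H. pose proof (Zok_Re f H). pose proof (Zok_Im f H).
  unfold Zsum. Ceq.
  - rewrite <- RZsum_lin by auto. apply RZsum_ext. intros m. reflexivity.
  - rewrite (RZsum_ext _ (fun m => Im c * Re (f m) - (- Re c) * Im (f m))).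
    rewrite RZsum_lin by auto. unfold Re, Im; ring. intros m. unfold Re, Im; simpl; ring.
Qed.

Lemma sgnZ_succ m : sgnZ (m + 1) = - sgnZ m.
Proof.
  unfold sgnZ. rewrite Z.even_add. simpl. destruct (Z.even m); simpl; ring.
Qed.
Lemma sgnZ_opp m : sgnZ (- m) = sgnZ m.
Proof. unfold sgnZ. rewrite Z.even_opp. reflexivity. Qed.
Lemma Rabs_sgnZ m : Rabs (sgnZ m) = 1.
Proof. unfold sgnZ. destruct (Z.even m); unfold Rabs; destruct Rcase_abs; lra. Qed.

Lemma exp_pow_nat a k : exp a ^ k = exp (INR k * a).
Proof.
  induction k. simpl. rewrite Rmult_0_l, exp_0. reflexivity.
  rewrite S_INR. simpl. rewrite IHk. rewrite <- exp_plus. f_equal. ring.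
Qed.

Lemma quad_bound x y s m : 0 < y ->
  m * x + m * (m - 1) / 2 * y - s * m >= - ((x - y/2 - s)^2 / (2*y)).
Proof.
  intros Hy. set (b := x - y/2 - s).
  assert (E : m * x + m * (m - 1) / 2 * y - s * m + (b^2 / (2*y)) = (y*m + b)^2 / (2*y)).
  { unfold b. field. lra. }
  assert (0 <= (y*m + b)^2 / (2*y)).
  { apply Rle_mult_inv_pos. apply pow2_ge_0. lra. }
  lra.
Qed.

Lemma Cmod_term eta z m :
  Cmod (theta_term eta z m) = exp (-(2*PI*(IZR m * Im z + IZR m * (IZR m - 1) / 2 * Im eta))).
Proof.
  unfold theta_term. rewrite Cmod_mult, Cmod_R, Rabs_sgnZ, Rmult_1_l, Cmod_ee.
  f_equal. f_equal. f_equal. rewrite mult_IZR, minus_IZR. simpl. unfold Im. simpl. field.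
Qed.

Lemma exp_mono_le a b : a <= b -> exp a <= exp b.
Proof. intros [H|H]. apply Rlt_le, exp_increasing, H. subst; lra. Qed.

Lemma exs_geom A q : 0 <= q < 1 -> ex_series (fun k => A * q ^ k).
Proof.
  intros Hq. apply (ex_series_scal_l A (fun k => q ^ k)). apply ex_series_geom.
  rewrite Rabs_pos_eq; lra.
Qed.

Lemma Zok_term eta z : 0 < Im eta -> Zok (theta_term eta z).
Proof.
  intros Hy. set (x := Im z). set (y := Im eta).
  assert (Hq : 0 <= exp (-(2*PI)) < 1).
  { split. apply Rlt_le, exp_pos. rewrite <- exp_0. apply exp_increasing.
    pose proof PI_RGT_0. lra. }
  pose proof PI_RGT_0 as Hpi.
  split.
  - apply (exs_le _ (fun k => exp (2*PI*((x - y/2 - 1)^2/(2*y))) * exp (-(2*PI)) ^ k)).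
    2: apply exs_geom; auto.
    intros k. rewrite Rabs_pos_eq by apply Cmod_ge_0. rewrite Cmod_term, exp_pow_nat, <- exp_plus.
    apply exp_mono_le.
    fold x y. rewrite <- INR_IZR_INZ.
    pose proof (quad_bound x y 1 (INR k) Hy). nra.
  - apply (exs_le _ (fun k => exp (2*PI*((x - y/2 + 1)^2/(2*y))) * exp (-(2*PI)) ^ k)).
    2: apply exs_geom; auto.
    intros k. rewrite Rabs_pos_eq by apply Cmod_ge_0. rewrite Cmod_term, exp_pow_nat, <- exp_plus.
    apply exp_mono_le.
    fold x y. rewrite minus_IZR, opp_IZR, <- INR_IZR_INZ.
    pose proof (quad_bound x y (-1) (- INR k - 1) Hy).
    replace (x - y/2 - -1) with (x - y/2 + 1) in H by ring.
    pose proof (pos_INR k). nra.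
Qed.

Ltac Zr := repeat first [rewrite mult_IZR | rewrite plus_IZR | rewrite minus_IZR | rewrite opp_IZR].



Lemma term_per eta z t m : theta_term eta (Cplus z (RtoC (IZR t))) m = theta_term eta z m.
Proof.
  unfold theta_term. f_equal. symmetry. rewrite <- (ee_per _ (m*t)). apply ee_ext. Ceq; Zr; ring.
Qed.

Lemma theta_per eta z t : theta eta (Cplus z (RtoC (IZR t))) = theta eta z.
Proof. rewrite !theta_Zsum. apply Zsum_ext. intros; apply term_per. Qed.

Lemma term_eta eta z m :
  theta_term eta (Cplus z eta) m = Cmult (Copp (ee (Copp z))) (theta_term eta z (m+1)).
Proof.
  unfold theta_term. rewrite sgnZ_succ.
  rewrite (ee_ext (Cplus (Cmult (RtoC (IZR (m+1))) z) (Cmult (RtoC (IZR ((m+1)*(m+1-1))/2)) eta))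
     (Cplus z (Cplus (Cmult (RtoC (IZR m)) (Cplus z eta)) (Cmult (RtoC (IZR (m*(m-1))/2)) eta))))
    by (Ceq; Zr; field).
  rewrite (ee_add z). pose proof (ee_opp z) as H.
  replace (RtoC (- sgnZ m)) with (Copp (RtoC (sgnZ m))) by (Ceq; ring).
  set (W := ee (Cplus (Cmult (RtoC (IZR m)) (Cplus z eta)) (Cmult (RtoC (IZR (m*(m-1))/2)) eta))).
  set (s := RtoC (sgnZ m)).
  transitivity (Cmult (Cmult s W) (Cmult (ee z) (ee (Copp z)))).
  rewrite H. ring. ring.
Qed.

Lemma theta_eta eta z : 0 < Im eta ->
  theta eta (Cplus z eta) = Cmult (Copp (ee (Copp z))) (theta eta z).
Proof.
  intros Hy. rewrite !theta_Zsum.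
  rewrite (Zsum_ext _ (fun m => Cmult (Copp (ee (Copp z))) (theta_term eta z (m+1)))) by apply term_eta.
  rewrite Zsum_scal. rewrite (Zsum_shift (theta_term eta z)). reflexivity.
  apply Zok_term; auto.
  apply (Zok_shift (theta_term eta z)), Zok_term; auto.
Qed.

Lemma term_neg eta z m :
  theta_term eta (Copp z) m = Cmult (Copp (ee (Copp z))) (theta_term eta z (-m+1)).
Proof.
  unfold theta_term. rewrite sgnZ_succ, sgnZ_opp.
  rewrite (ee_ext (Cplus (Cmult (RtoC (IZR (-m+1))) z) (Cmult (RtoC (IZR ((-m+1)*(-m+1-1))/2)) eta))
     (Cplus z (Cplus (Cmult (RtoC (IZR m)) (Copp z)) (Cmult (RtoC (IZR (m*(m-1))/2)) eta))))
    by (Ceq; Zr; field).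
  rewrite (ee_add z). pose proof (ee_opp z) as H.
  replace (RtoC (- sgnZ m)) with (Copp (RtoC (sgnZ m))) by (Ceq; ring).
  set (W := ee (Cplus (Cmult (RtoC (IZR m)) (Copp z)) (Cmult (RtoC (IZR (m*(m-1))/2)) eta))).
  set (s := RtoC (sgnZ m)).
  transitivity (Cmult (Cmult s W) (Cmult (ee z) (ee (Copp z)))).
  rewrite H. ring. ring.
Qed.

Lemma theta_neg eta z : 0 < Im eta ->
  theta eta (Copp z) = Cmult (Copp (ee (Copp z))) (theta eta z).
Proof.
  intros Hy. rewrite !theta_Zsum.
  rewrite (Zsum_ext _ (fun m => Cmult (Copp (ee (Copp z))) (theta_term eta z (-m+1)))) by apply term_neg.
  assert (H0 : Zok (theta_term eta z)) by (apply Zok_term; auto).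
  assert (H1 : Zok (fun m => theta_term eta z (m+1))) by (apply (Zok_shift (theta_term eta z)); auto).
  rewrite Zsum_scal.
  rewrite (Zsum_neg (fun m => theta_term eta z (m+1))) by auto.
  rewrite (Zsum_shift (theta_term eta z)) by auto. reflexivity.
  apply (Zok_neg (fun m => theta_term eta z (m+1))); auto.
Qed.

Lemma theta_refl eta y : 0 < Im eta -> theta eta (Cplus (Copp y) eta) = theta eta y.
Proof.
  intros Hy. rewrite theta_eta, theta_neg by auto.
  replace (Copp (Copp y)) with y by (Ceq; ring).
  pose proof (ee_opp y) as H.
  transitivity (Cmult (Cmult (ee y) (ee (Copp y))) (theta eta y)). ring.
  rewrite H. ring.
Qed.




Lemma INR_IZR n : INR n = IZR (Z.of_nat n).
Proof. apply INR_IZR_INZ. Qed.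

Lemma mod_split n x : (0 < n)%nat ->
  IZR x = INR n * IZR (x / Z.of_nat n) + IZR (x mod Z.of_nat n).
Proof.
  intros Hn. rewrite INR_IZR, <- mult_IZR, <- plus_IZR. f_equal. apply Z_div_mod_eq_full.
Qed.

Lemma mod_range n x : (0 < n)%nat -> (0 <= x mod Z.of_nat n < Z.of_nat n)%Z.
Proof. intros Hn. apply Z.mod_pos_bound. lia. Qed.

Lemma sigma_surj n : (0 < n)%nat -> forall y, (0 <= y < Z.of_nat n)%Z ->
  exists x, (0 <= x < Z.of_nat n)%Z /\ ((- x) mod Z.of_nat n)%Z = y.
Proof.
  intros Hn y Hy. exists ((-y) mod Z.of_nat n)%Z. split. apply mod_range; auto.
  rewrite Z.mod_opp_mod_opp. apply Z.mod_small; auto.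
Qed.

Lemma shift_surj n s : (0 < n)%nat -> forall y, (0 <= y < Z.of_nat n)%Z ->
  exists x, (0 <= x < Z.of_nat n)%Z /\ ((x + s) mod Z.of_nat n)%Z = y.
Proof.
  intros Hn y Hy. exists ((y - s) mod Z.of_nat n)%Z. split. apply mod_range; auto.
  rewrite Z.add_mod_idemp_l by lia. replace (y - s + s)%Z with y by lia. apply Z.mod_small; auto.
Qed.

Lemma L_prod N s A c :
  cprod (map Z.of_nat (seq 0 N)) (fun m => Cmult s (ee (Cplus A (RtoC (IZR m * c))))) =
  Cmult (Cpow s N) (ee (Cplus (Cmult (RtoC (INR N)) A) (RtoC (INR N * (INR N - 1) / 2 * c)))).
Proof.
  induction N.
  - simpl. rewrite (ee_ext (Cplus (Cmult (RtoC 0) A) (RtoC (0 * (0 - 1) / 2 * c))) (RtoC 0)) by (Ceq; field). rewrite ee_0. unfold cprod; simpl. Ceq; field.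
  - rewrite seq_S, map_app, cprod_app, IHN. unfold cprod. cbn [map fold_right Cpow].
    rewrite (ee_ext (Cplus (Cmult (RtoC (INR (S N))) A) (RtoC (INR (S N) * (INR (S N) - 1) / 2 * c)))
      (Cplus (Cplus (Cmult (RtoC (INR N)) A) (RtoC (INR N * (INR N - 1) / 2 * c))) (Cplus A (RtoC (IZR (Z.of_nat N) * c))))).
    rewrite (ee_add (Cplus (Cmult (RtoC (INR N)) A) (RtoC (INR N * (INR N - 1) / 2 * c)))). rewrite Nat.add_0_l. generalize (Cpow s N); intros P. ring.
    rewrite <- INR_IZR, S_INR. Ceq; field.
Qed.

Lemma ee_halfs Y k : ee (Cplus Y (RtoC (INR k / 2))) = Cmult (Cpow (Copp (RtoC 1)) k) (ee Y).
Proof.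
  induction k.
  - simpl. rewrite (ee_ext _ Y) by (Ceq; field). ring.
  - rewrite (ee_ext _ (Cplus (Cplus Y (RtoC (INR k / 2))) (RtoC (1/2)))) by (rewrite S_INR; Ceq; field).
    rewrite ee_add, IHk, ee_half. cbn [Cpow]. generalize (Cpow (Copp (RtoC 1)) k). intros P. ring.
Qed.

Lemma pow_m1_sq k : Cmult (Cpow (Copp (RtoC 1)) k) (Cpow (Copp (RtoC 1)) k) = RtoC 1.
Proof.
  induction k. simpl. Ceq; field.
  cbn [Cpow]. generalize dependent (Cpow (Copp (RtoC 1)) k). intros P HP. transitivity (Cmult (Cmult (Copp (RtoC 1)) (Copp (RtoC 1))) (Cmult P P)).
  ring. rewrite HP. Ceq; field.
Qed.

Lemma prod_full n A : (0 < n)%nat ->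
  cprod (idx n) (fun m => Cmult (Copp (RtoC 1)) (ee (Cplus A (RtoC (IZR m * / INR n))))) =
  Copp (ee (Cmult (RtoC (INR n)) A)).
Proof.
  intros Hn. unfold idx. rewrite L_prod.
  destruct n as [|n']. lia.
  rewrite (ee_ext _ (Cplus (Cmult (RtoC (INR (S n'))) A) (RtoC (INR n' / 2)))).
  rewrite ee_halfs. cbn [Cpow]. pose proof (pow_m1_sq n') as HP.
  generalize dependent (Cpow (Copp (RtoC 1)) n'). intros P HP.
  transitivity (Cmult (Copp (RtoC 1)) (Cmult (Cmult P P) (ee (Cmult (RtoC (INR (S n'))) A)))).
  ring. rewrite HP. ring.
  assert (INR (S n') <> 0) by (apply not_0_INR; lia).
  rewrite S_INR in *; Ceq; field; auto.
Qed.

Definition pre (n : nat) (eta : C) (a : Z) (z : C) : C :=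
  ee (Cplus (Cplus (Cmult (RtoC (IZR a)) z) (RtoC (IZR a / (2 * INR n))))
            (Cmult (RtoC (IZR (a * (a - Z.of_nat n)) / (2 * INR n))) eta)).
Definition ppart (n : nat) (eta : C) (a : Z) (z : C) : C :=
  cprod (idx n) (fun m =>
       theta eta (Cplus (Cplus z (RtoC (IZR m / INR n))) (Cmult (RtoC (IZR a / INR n)) eta))).

Lemma theta_alpha_eq n eta al z :
  theta_alpha n eta al z = Cmult (pre n eta (al mod Z.of_nat n) z) (ppart n eta (al mod Z.of_nat n) z).
Proof. reflexivity. Qed.

Lemma ppart_sigma n eta a w : (0 < n)%nat -> 0 < Im eta ->
  cprod (idx n) (fun m => theta eta (Cplus (Cplus w (RtoC (IZR (-m) / INR n))) (Cmult (RtoC (IZR a / INR n)) eta)))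
  = ppart n eta a w.
Proof.
  intros Hn Hy. unfold ppart. symmetry.
  rewrite <- (cprod_reidx n (fun m => ((-m) mod Z.of_nat n)%Z)) by (apply sigma_surj; auto).
  apply cprod_ext_in. intros m _.
  rewrite <- (theta_per eta _ ((-m) / Z.of_nat n)). f_equal.
  assert (INR n <> 0) by (apply not_0_INR; lia).
  rewrite (mod_split n (-m)) by auto. Ceq; field; auto.
Qed.

Lemma ee_neg E : Copp (ee E) = ee (Cplus (RtoC (1/2)) E).
Proof. rewrite ee_add, ee_half. ring. Qed.

Lemma KL n eta al w : (0 < n)%nat -> 0 < Im eta ->
  theta_alpha n eta (-al) (Copp w) =
  Cmult (Copp (ee (Cplus (Copp (Cmult (RtoC (INR n)) w)) (RtoC (- IZR (al mod Z.of_nat n) / INR n)))))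
        (theta_alpha n eta al w).
Proof.
  intros Hn Hy. assert (Hn0 : INR n <> 0) by (apply not_0_INR; lia).
  rewrite !theta_alpha_eq.
  destruct (Z.eq_dec (al mod Z.of_nat n) 0) as [H0|H0].
  - rewrite H0, (Z.mod_opp_l_z al) by (auto; lia).
    unfold pre. rewrite (ee_ext _ (RtoC 0)) by (Ceq; field; auto).
    rewrite (ee_ext (Cplus (Cplus (Cmult (RtoC (IZR 0)) w) _) _) (RtoC 0)) by (Ceq; Zr; field; auto). rewrite ee_0.
    unfold ppart.
    rewrite (cprod_ext_in _ _ (fun m => Cmult (Cmult (Copp (RtoC 1)) (ee (Cplus (Copp w) (RtoC (IZR m * / INR n)))))
       (theta eta (Cplus (Cplus w (RtoC (IZR (-m) / INR n))) (Cmult (RtoC (IZR 0 / INR n)) eta))))).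
    rewrite cprod_mult, prod_full, ppart_sigma by auto. unfold ppart.
    rewrite (ee_ext (Cmult (RtoC (INR n)) (Copp w)) (Cplus (Copp (Cmult (RtoC (INR n)) w)) (RtoC (- IZR 0 / INR n)))).
    ring. Ceq; field; auto.
    intros m _.
    match goal with |- _ = Cmult _ (theta eta ?Y) => transitivity (theta eta (Copp Y)) end.
    f_equal. Ceq; Zr; field; auto.
    rewrite theta_neg by auto.
    match goal with |- Cmult (Copp (ee ?A)) _ = Cmult (Cmult _ (ee ?B)) _ => rewrite (ee_ext A B) end.
    ring. Ceq; Zr; field; auto.
  - rewrite (Z.mod_opp_l_nz al) by (auto; lia).
    set (a := (al mod Z.of_nat n)%Z) in *.
    unfold ppart at 1.
    rewrite (cprod_ext_in _ _ (fun m =>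
       theta eta (Cplus (Cplus w (RtoC (IZR (-m) / INR n))) (Cmult (RtoC (IZR a / INR n)) eta)))).
    rewrite ppart_sigma by auto.
    rewrite ee_neg. unfold pre.
    rewrite (Cmult_assoc (ee _) (ee _)), <- ee_add.
    f_equal. apply ee_ext. Ceq; Zr; rewrite <- ?INR_IZR; field; auto.
    intros m _. rewrite <- (theta_refl eta _ Hy). f_equal. Ceq; Zr; rewrite <- ?INR_IZR; field; auto.
Qed.


Lemma delta_cond n a r j : (0 < n)%nat -> (0 <= a < Z.of_nat n)%Z -> (0 <= j < Z.of_nat n)%Z ->
  (Z.eqb a ((j - r) mod Z.of_nat n)%Z = true <-> j = ((a + r) mod Z.of_nat n)%Z).
Proof.
  intros Hn Ha Hj. rewrite Z.eqb_eq. split; intros H.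
  - subst a. rewrite Z.add_mod_idemp_l by lia. replace (j - r + r)%Z with j by lia.
    rewrite Z.mod_small; lia.
  - subst j. rewrite Zminus_mod_idemp_l. replace (a + r - r)%Z with a by lia.
    rewrite Z.mod_small; lia.
Qed.

Lemma delta_cond2 n b r i : (0 < n)%nat -> (0 <= b < Z.of_nat n)%Z -> (0 <= i < Z.of_nat n)%Z ->
  (Z.eqb b ((i + r) mod Z.of_nat n)%Z = true <-> i = ((b - r) mod Z.of_nat n)%Z).
Proof.
  intros Hn Hb Hi. rewrite Z.eqb_eq. split; intros H.
  - subst b. rewrite Zminus_mod_idemp_l. replace (i + r - r)%Z with i by lia.
    rewrite Z.mod_small; lia.
  - subst i. rewrite Z.add_mod_idemp_l by lia. replace (b - r + r)%Z with b by lia.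
    rewrite Z.mod_small; lia.
Qed.

Lemma csum_if_const (B : bool) l (g : Z -> C) :
  csum l (fun x => if B then g x else RtoC 0) = if B then csum l g else RtoC 0.
Proof. destruct B. reflexivity. apply csum_zero. Qed.

Lemma Rop_simpl n k' eta tau z v a b : (0 < n)%nat ->
  (0 <= a < Z.of_nat n)%Z -> (0 <= b < Z.of_nat n)%Z ->
  Rop n k' eta tau z v a b =
  csum (idx n) (fun r => Cmult (Rcoef n k' eta tau z ((b - r) mod Z.of_nat n)%Z ((a + r) mod Z.of_nat n)%Z r)
                              (v ((b - r) mod Z.of_nat n)%Z ((a + r) mod Z.of_nat n)%Z)).
Proof.
  intros Hn Ha Hb. unfold Rop.
  rewrite (csum_ext_in _ _ (fun i => csum (idx n) (fun r => csum (idx n) (fun j =>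
      if andb (Z.eqb a ((j - r) mod Z.of_nat n)%Z) (Z.eqb b ((i + r) mod Z.of_nat n)%Z) then
        Cmult (Rcoef n k' eta tau z i j r) (v i j) else RtoC 0)))).
  2: { intros i _. apply csum_swap. }
  rewrite csum_swap. apply csum_ext_in. intros r _.
  rewrite (csum_ext_in _ _ (fun i => if Z.eqb b ((i + r) mod Z.of_nat n)%Z then
      Cmult (Rcoef n k' eta tau z i ((a + r) mod Z.of_nat n)%Z r) (v i ((a + r) mod Z.of_nat n)%Z) else RtoC 0)).
  - apply (csum_delta _ (fun i => Z.eqb b ((i + r) mod Z.of_nat n)%Z)
      (fun i => Cmult (Rcoef n k' eta tau z i ((a + r) mod Z.of_nat n)%Z r) (v i ((a + r) mod Z.of_nat n)%Z))
      ((b - r) mod Z.of_nat n)%Z). apply NoDup_idx. apply in_idx, mod_range; auto.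
    intros i Hi. apply delta_cond2; auto. apply in_idx; auto.
  - intros i Hi. rewrite (csum_ext_in _ _ (fun j => if Z.eqb b ((i + r) mod Z.of_nat n)%Z then
       (if Z.eqb a ((j - r) mod Z.of_nat n)%Z then Cmult (Rcoef n k' eta tau z i j r) (v i j) else RtoC 0)
       else RtoC 0)).
    rewrite csum_if_const. destruct (Z.eqb b ((i + r) mod Z.of_nat n)%Z); auto.
    apply (csum_delta _ (fun j => Z.eqb a ((j - r) mod Z.of_nat n)%Z) (fun j => Cmult (Rcoef n k' eta tau z i j r) (v i j))).
    apply NoDup_idx. apply in_idx, mod_range; auto.
    intros j Hj. apply delta_cond; auto. apply in_idx; auto.
    intros j _. destruct (Z.eqb a _), (Z.eqb b _); reflexivity.
Qed.


Lemma csum_mult_r l f w : Cmult (csum l f) w = csum l (fun x => Cmult (f x) w).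
Proof.
  rewrite Cmult_comm, <- csum_scal. apply csum_ext_in. intros; apply Cmult_comm.
Qed.

Lemma csum3_swap l (f : Z -> Z -> Z -> C) :
  csum l (fun a => csum l (fun b => csum l (fun r => f a b r))) =
  csum l (fun r => csum l (fun a => csum l (fun b => f a b r))).
Proof.
  rewrite (csum_ext_in _ _ (fun a => csum l (fun r => csum l (fun b => f a b r)))).
  apply csum_swap. intros a _. apply csum_swap.
Qed.

Section Main.
Variables (n k : nat) (eta tau z : C).
Hypothesis Hn : (0 < n)%nat.
Hypothesis PI : forall x y r : Z,
  Cmult (ee (Copp (Cmult (RtoC (INR n ^ 2)) z))) (Rcoef n (n - k) eta (Copp tau) (Copp z) x y r)
  = Rcoef n k eta tau z ((y - r) mod Z.of_nat n)%Z ((x + r) mod Z.of_nat n)%Z r.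

Lemma main_red u v :
    bform n
      (fun a b => Cmult (ee (Copp (Cmult (RtoC (INR n ^ 2)) z)))
                        (Rop n (n - k) eta (Copp tau) (Copp z) u a b))
      v
    = bform n u (Rop n k eta tau z v).
Proof.
  set (c := ee (Copp (Cmult (RtoC (INR n ^ 2)) z))). set (N := Z.of_nat n).
  unfold bform.
  transitivity (csum (idx n) (fun r => csum (idx n) (fun a => csum (idx n) (fun b =>
     Cmult (Cmult c (Cmult (Rcoef n (n - k) eta (Copp tau) (Copp z) ((b - r) mod N)%Z ((a + r) mod N)%Z r)
        (u ((b - r) mod N)%Z ((a + r) mod N)%Z))) (v a b))))).
  { rewrite <- csum3_swap. apply csum_ext_in. intros a Ha.
    apply csum_ext_in. intros b Hb.
    apply in_idx in Ha, Hb. rewrite Rop_simpl by auto.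
    rewrite <- csum_scal, csum_mult_r. reflexivity. }
  transitivity (csum (idx n) (fun r => csum (idx n) (fun a => csum (idx n) (fun b =>
     Cmult (u a b) (Cmult (Rcoef n k eta tau z ((b - r) mod N)%Z ((a + r) mod N)%Z r)
        (v ((b - r) mod N)%Z ((a + r) mod N)%Z)))))).
  2: { rewrite <- csum3_swap. apply csum_ext_in. intros a Ha.
    apply csum_ext_in. intros b Hb.
    apply in_idx in Ha, Hb. rewrite Rop_simpl by auto.
    rewrite <- csum_scal. reflexivity. }
  apply csum_ext_in. intros r _.
  rewrite csum_swap.
  rewrite <- (csum_reidx n (fun x => ((x + r) mod N)%Z)) by (apply shift_surj; auto).
  apply csum_ext_in. intros x Hx. apply in_idx in Hx.
  rewrite <- (csum_reidx n (fun y => ((y + - r) mod N)%Z)) by (apply shift_surj; auto).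
  apply csum_ext_in. intros y Hy. apply in_idx in Hy.
  assert (E1 : (((x + r) mod N - r) mod N)%Z = x).
  { rewrite Zminus_mod_idemp_l. replace (x + r - r)%Z with x by lia. apply Z.mod_small; lia. }
  assert (E2 : (((y + - r) mod N + r) mod N)%Z = y).
  { rewrite Z.add_mod_idemp_l by lia. replace (y + - r + r)%Z with y by lia. apply Z.mod_small; lia. }
  rewrite E1, E2.
  assert (E3 : ((y + - r) mod N)%Z = ((y - r) mod N)%Z) by (f_equal; lia).
  rewrite E3. unfold c, N. rewrite <- (PI x y r). fold c.
  set (R' := Rcoef n (n - k) eta (Copp tau) (Copp z) x y r).
  ring.
Qed.
End Main.




Lemma Cinv_0' : Cinv (RtoC 0) = RtoC 0.
Proof. unfold Cinv, RtoC; simpl. f_equal; unfold Rdiv; ring. Qed.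

Lemma ee_nz E : ee E <> RtoC 0.
Proof.
  intros H. pose proof (ee_opp E) as H1. rewrite H in H1.
  assert (Cmult (RtoC 0) (ee (Copp E)) = RtoC 0) by ring. rewrite H0 in H1.
  apply (f_equal fst) in H1. simpl in H1. lra.
Qed.

Lemma Cinv_mult a b : a <> RtoC 0 -> Cinv (Cmult a b) = Cmult (Cinv a) (Cinv b).
Proof.
  intros Ha. destruct (Ceq_dec b (RtoC 0)) as [Hb|Hb].
  - subst b. rewrite Cmult_0_r, Cinv_0'. ring.
  - field. split; auto.
Qed.

Lemma theta_alpha_mod n eta x y w : (x mod Z.of_nat n = y mod Z.of_nat n)%Z ->
  theta_alpha n eta x w = theta_alpha n eta y w.
Proof. intros H. rewrite !theta_alpha_eq, H. reflexivity. Qed.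

Lemma Permutation_filter' (p : Z -> bool) l l' : Permutation l l' -> Permutation (filter p l) (filter p l').
Proof.
  induction 1; simpl; auto.
  - destruct (p x); auto.
  - destruct (p x), (p y); auto. apply perm_swap.
  - eapply perm_trans; eauto.
Qed.

Lemma cprod_single l d f : NoDup l -> In d l ->
  cprod (filter (fun x => negb (negb (Z.eqb x d))) l) f = f d.
Proof.
  induction l as [|a l IH]; simpl; intros Hnd Hin. contradiction.
  inversion Hnd; subst. destruct Hin as [Ha|Hin].
  - subst a. rewrite Z.eqb_refl. simpl.
    assert (filter (fun x => negb (negb (Z.eqb x d))) l = nil) as ->.
    { clear IH H2 Hnd. revert H1. induction l as [|b l IHl]; intros H1; simpl; auto.
      destruct (Z.eqb_spec b d). exfalso; apply H1; left; auto.
      simpl. apply IHl. intros H3; apply H1; right; auto. }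
    unfold cprod; simpl. Ceq; ring.
  - destruct (Z.eqb_spec a d). subst; contradiction. simpl. apply IH; auto.
Qed.

Lemma prod_full_neg n A : (0 < n)%nat ->
  cprod (idx n) (fun m => Cmult (Copp (RtoC 1)) (ee (Cplus A (RtoC (IZR m * (- / INR n)))))) =
  Copp (ee (Cmult (RtoC (INR n)) A)).
Proof.
  intros Hn. unfold idx. rewrite L_prod.
  destruct n as [|n']. lia.
  rewrite (ee_ext _ (Cplus (Cplus (Cmult (RtoC (INR (S n'))) A) (RtoC (IZR (- Z.of_nat n')))) (RtoC (INR n' / 2)))).
  rewrite ee_halfs, ee_per. cbn [Cpow]. pose proof (pow_m1_sq n') as HP.
  generalize dependent (Cpow (Copp (RtoC 1)) n'). intros P HP.
  transitivity (Cmult (Copp (RtoC 1)) (Cmult (Cmult P P) (ee (Cmult (RtoC (INR (S n'))) A)))).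
  ring. rewrite HP. ring.
  assert (INR (S n') <> 0) by (apply not_0_INR; lia).
  rewrite opp_IZR, <- INR_IZR. rewrite S_INR in *; Ceq; field; auto.
Qed.

Lemma FL n eta w d : (0 < n)%nat -> 0 < Im eta -> (0 <= d < Z.of_nat n)%Z ->
  cprod (filter (fun b => negb (Z.eqb b ((-d) mod Z.of_nat n))) (idx n)) (fun b => theta_alpha n eta b (Copp w))
  = Cmult (Cmult (Copp (ee (Cmult (RtoC (INR n)) (Copp (Cmult (RtoC (INR n)) w)))))
                 (Copp (ee (Copp (Cplus (Copp (Cmult (RtoC (INR n)) w)) (RtoC (IZR d * (- / INR n))))))))
          (cprod (filter (fun b => negb (Z.eqb b d)) (idx n)) (fun b => theta_alpha n eta b w)).
Proof.
  intros Hn Hy Hd. assert (Hn0 : INR n <> 0) by (apply not_0_INR; lia).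
  set (N := Z.of_nat n) in *.
  set (A := Copp (Cmult (RtoC (INR n)) w)).
  set (f := fun b => Cmult (Copp (RtoC 1)) (ee (Cplus A (RtoC (IZR b * (- / INR n)))))).
  rewrite (cprod_perm _ (filter (fun b => negb (Z.eqb b ((-d) mod N))) (map (fun b => ((-b) mod N)%Z) (idx n))))
    by (apply Permutation_filter', perm_idx, sigma_surj; auto).
  rewrite filter_map_swap, cprod_map.
  rewrite (filter_ext_in _ (fun b => negb (Z.eqb b d))).
  2: { intros b Hb. apply in_idx in Hb. f_equal.
       destruct (Z.eqb_spec ((-b) mod N) ((-d) mod N)) as [E|E], (Z.eqb_spec b d) as [E'|E']; auto.
       - exfalso. apply E'. apply (f_equal (fun t => ((-t) mod N)%Z)) in E.
         rewrite !Z.mod_opp_mod_opp, !Z.mod_small in E; auto.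
       - subst; tauto. }
  rewrite (cprod_ext_in _ (fun b => theta_alpha n eta ((-b) mod N) (Copp w)) (fun b => Cmult (f b) (theta_alpha n eta b w))).
  2: { intros b Hb. apply filter_In in Hb as [Hb _]. apply in_idx in Hb.
       rewrite (theta_alpha_mod n eta _ (-b)) by (apply Z.mod_mod; lia).
       rewrite KL by auto. unfold f. rewrite (Z.mod_small b) by auto.
       rewrite (ee_ext (Cplus (Copp (Cmult (RtoC (INR n)) w)) (RtoC (- IZR b / INR n))) (Cplus A (RtoC (IZR b * - / INR n))))
         by (unfold A; Ceq; field; auto).
       ring. }
  rewrite cprod_mult.
  assert (Hfull : cprod (idx n) f = Copp (ee (Cmult (RtoC (INR n)) A))) by (apply prod_full_neg; auto).
  rewrite (cprod_filter _ (fun b => negb (Z.eqb b d))), cprod_single in Hfull.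
  2: apply NoDup_idx. 2: apply in_idx; auto.
  rewrite <- Hfull.
  assert (Hg : Cmult (f d) (Copp (ee (Copp (Cplus A (RtoC (IZR d * - / INR n))))) ) = RtoC 1).
  { unfold f. transitivity (Cmult (ee (Cplus A (RtoC (IZR d * - / INR n)))) (ee (Copp (Cplus A (RtoC (IZR d * - / INR n)))))).
    ring. apply ee_opp. }
  generalize dependent (Copp (ee (Copp (Cplus A (RtoC (IZR d * - / INR n)))))). intros g Hg.
  transitivity (Cmult (cprod (filter (fun b => negb (Z.eqb b d)) (idx n)) f)
     (Cmult (Cmult (f d) g) (cprod (filter (fun b => negb (Z.eqb b d)) (idx n)) (fun b => theta_alpha n eta b w)))).
  rewrite Hg. ring. ring.
Qed.




Lemma PI n k eta tau z x y r : (1 <= k)%nat -> (k < n)%nat -> 0 < Im eta ->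
  Cmult (ee (Copp (Cmult (RtoC (INR n ^ 2)) z))) (Rcoef n (n - k) eta (Copp tau) (Copp z) x y r)
  = Rcoef n k eta tau z ((y - r) mod Z.of_nat n)%Z ((x + r) mod Z.of_nat n)%Z r.
Proof.
  intros Hk Hkn Hy. assert (Hn : (0 < n)%nat) by lia.
  assert (Hn0 : INR n <> 0) by (apply not_0_INR; lia).
  unfold Rcoef. cbv zeta.
  assert (HN : (0 < (Z.of_nat n))%Z) by lia.
  set (I := ((y - r) mod (Z.of_nat n))%Z). set (J := ((x + r) mod (Z.of_nat n))%Z).
  assert (HI : I = (y - r - (Z.of_nat n) * ((y - r) / (Z.of_nat n)))%Z) by (apply Z.mod_eq; lia).
  assert (HJ : J = (x + r - (Z.of_nat n) * ((x + r) / (Z.of_nat n)))%Z) by (apply Z.mod_eq; lia).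
  set (d := ((J - I - r) mod (Z.of_nat n))%Z).
  assert (Hd : d = (J - I - r - (Z.of_nat n) * ((J - I - r) / (Z.of_nat n)))%Z) by (apply Z.mod_eq; lia).
  assert (Hdr : (0 <= d < (Z.of_nat n))%Z) by (apply Z.mod_pos_bound; lia).
  assert (C1 : ((y - x - r) mod (Z.of_nat n))%Z = ((-d) mod (Z.of_nat n))%Z).
  { apply Z.cong_iff_ex. exists ((y - r) / (Z.of_nat n) - (x + r) / (Z.of_nat n) - (J - I - r) / (Z.of_nat n))%Z.
    rewrite Hd. rewrite HI, HJ at 1. ring. }
  rewrite C1. rewrite (FL n eta (Copp z) d Hn Hy Hdr).
  assert (C2 : ((y - x + r * (Z.of_nat (n - k) - 1)) mod Z.of_nat n)%Z
              = ((- (J - I + r * (Z.of_nat k - 1))) mod Z.of_nat n)%Z).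
  { apply Z.cong_iff_ex. exists (r - (x + r) / Z.of_nat n + (y - r) / Z.of_nat n)%Z.
    rewrite Nat2Z.inj_sub by lia. rewrite HI, HJ. ring. }
  rewrite (theta_alpha_mod n eta _ _ _ C2).
  replace (Cplus (Copp (Copp z)) (Copp tau)) with (Copp (Cplus (Copp z) tau)) by (Ceq; ring).
  rewrite KL by auto.
  assert (C3 : ((Z.of_nat (n - k) * r) mod Z.of_nat n)%Z = ((- (Z.of_nat k * r)) mod Z.of_nat n)%Z).
  { apply Z.cong_iff_ex. exists r. rewrite Nat2Z.inj_sub by lia. ring. }
  rewrite (theta_alpha_mod n eta _ _ _ C3).
  rewrite KL by auto.
  set (g := ((J - I + r * (Z.of_nat k - 1)) mod Z.of_nat n)%Z).
  set (h := ((Z.of_nat k * r) mod Z.of_nat n)%Z).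
  assert (Hg : g = (J - I + r * (Z.of_nat k - 1) - Z.of_nat n * ((J - I + r * (Z.of_nat k - 1)) / Z.of_nat n))%Z) by (apply Z.mod_eq; lia).
  assert (Hh : h = (Z.of_nat k * r - Z.of_nat n * ((Z.of_nat k * r) / Z.of_nat n))%Z) by (apply Z.mod_eq; lia).
  set (t := ((J - I + r * (Z.of_nat k - 1)) / Z.of_nat n - (J - I - r) / Z.of_nat n - (Z.of_nat k * r) / Z.of_nat n)%Z).
  assert (Hdgh : d = (g - h + t * Z.of_nat n)%Z).
  { rewrite Hd, Hg, Hh. unfold t. ring. }
  clearbody d g h t. clear C1 C2 C3.
  generalize (cprod (filter (fun b : Z => negb (b =? d)%Z) (idx n)) (fun b : Z => theta_alpha n eta b (- z))). intros P.
  generalize (cprod (map Z.of_nat (seq 1 (n - 1))) (fun b : Z => theta_alpha n eta b 0)). intros Q.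
  generalize (theta_alpha n eta (J - I + r * (Z.of_nat k - 1)) (Cplus (Copp z) tau)). intros T1.
  generalize (theta_alpha n eta (Z.of_nat k * r) tau). intros T2.
  assert (HdR : IZR d = IZR g - IZR h + IZR t * INR n) by (rewrite Hdgh, INR_IZR; Zr; ring).
  clear Hdgh Hd Hg Hh.
  unfold Cdiv. rewrite Cinv_mult.
  2: { rewrite ee_neg. apply ee_nz. }
  rewrite !ee_neg.
  match goal with |- Cmult (ee ?a) (Cmult (Cmult (Cmult (Cmult (ee ?b) (ee ?c)) _) _) (Cmult (Cmult (ee ?e) _) (Cmult (Cinv (ee ?f)) _))) = _ =>
    assert (HK : Cmult (Cmult (Cmult (ee a) (ee b)) (ee c)) (ee e) = ee f);
    [ rewrite <- !ee_add; rewrite <- (ee_per _ (-t - 1)); apply ee_ext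
    | transitivity (Cmult (Cmult (Cmult (Cmult (Cmult (ee a) (ee b)) (ee c)) (ee e)) (Cinv (ee f))) (Cmult (Cmult P (Cinv Q)) (Cmult T1 (Cinv T2))));
      [ ring | rewrite HK, Cinv_r; [ring | apply ee_nz] ] ]
  end.
  Ceq; Zr; rewrite ?HdR; field; auto.
Qed.

Theorem lemma7p3 (n k : nat) (eta tau z : C) :
  (1 <= k)%nat -> (k < n)%nat -> Nat.gcd n k = 1%nat ->
  0 < Im eta ->
  ~ (exists a b : Z, tau = Cdiv (Cplus (RtoC (IZR a)) (Cmult (RtoC (IZR b)) eta)) (RtoC (INR n))) ->
  forall u v : Z -> Z -> C,
    bform n
      (fun a b => Cmult (ee (Copp (Cmult (RtoC (INR n ^ 2)) z)))
                        (Rop n (n - k) eta (Copp tau) (Copp z) u a b))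
      v
    = bform n u (Rop n k eta tau z v).
Proof.
  intros Hk Hkn Hg Hy Htau u v.
  apply main_red. lia.
  intros x y r. apply PI; auto.
Qed.
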